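(* Let $S\subseteq[n]$ with $|S|=\tau$ and $i\in S$. Then (1) $C_f^{(i)}\le C_f^{(S)}\le C_f$; and (2) $\frac1nC_f^{\otimes}=C_f^{1}\le C_f^{\tau}\le C_f^{n}=C_f$.
   Context: Let $\mathcal{M}=\mathcal{M}_1\times\cdots\times\mathcal{M}_n$, each $\mathcal{M}_i\subset\mathbb{R}^{m_i}$ nonempty compact convex, and $f:\mathbb{R}^m\to\mathbb{R}$ differentiable. Notation: for $S\subseteq[n]$, $x_{(S)}$ is the subvector of blocks in $S$, $\mathcal{M}^{(S)}=\prod_{i\in S}\mathcal{M}_i$, $\nabla_{(S)}f$ the partial gradient, $s_{[S]}$ is $s_{(S)}$ padded by zeros outside $S$. Set curvature: $C_f^{(S)}=\sup\frac{2}{\gamma^2}\big(f(y)-f(x)-\langle y_{(S)}-x_{(S)},\nabla_{(S)}f(x)\rangle\big)$ over $x\in\mathcal{M}$, $s_{(S)}\in\mathcal{M}^{(S)}$, $\gamma\in(0,1]$, $y=x+\gamma(s_{[S]}-x_{[S]})$. $C_f^{(i)}=C_f^{(\{i\})}$ (coordinate curvature), $C_f^{\otimes}=\sum_{i=1}^nC_f^{(i)}$ (product curvature), $C_f=\sup_{x,s\in\mathcal{M},\gamma\in(0,1],y=x+\gamma(s-x)}\frac{2}{\gamma^2}(f(y)-f(x)-\langle y-x,\nabla f(x)\rangle)$ (global curvature), and $C_f^\tau=\binom{n}{\tau}^{-1}\sum_{S\subseteq[n],|S|=\tau}C_f^{(S)}$. *)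

(* Defs.v *)
From HB Require Import structures.
From mathcomp Require Import all_boot all_order all_algebra.
From mathcomp Require Import all_classical all_reals all_analysis.
Set Implicit Arguments. Unset Strict Implicit. Unset Printing Implicit Defensive.
Import Order.TTheory GRing.Theory Num.Theory.
Import numFieldNormedType.Exports.
Local Open Scope classical_set_scope.
Local Open Scope ring_scope.

(* Ambient space R^N ('rV[R]_N); the coordinates are partitioned into n blocks
   by blk : 'I_N -> 'I_n, block i playing the role of R^{m_i}. *)
Section Curv.
Variables (R : realType) (N n : nat) (blk : 'I_N -> 'I_n).

Definition padS (S : {set 'I_n}) (x : 'rV[R]_N) : 'rV[R]_N :=
  \row_j (if blk j \in S then x ord0 j else 0).

(* vectors supported on the blocks of S (the image of R^{(S)} in R^N) *)
Definition supported_on (S : {set 'I_n}) (v : 'rV[R]_N) : Prop :=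
  forall j, blk j \notin S -> v ord0 j = 0.

(* s_[S] with s_(S) in M^(S) = prod_{i in S} M_i (each M_i given as a subset
   of the embedded copy of R^{m_i}) *)
Definition inMS (Mi : 'I_n -> set 'rV[R]_N) (S : {set 'I_n}) (s : 'rV[R]_N) : Prop :=
  supported_on S s /\ forall i, i \in S -> Mi i (padS [set i] s).

Definition inM (Mi : 'I_n -> set 'rV[R]_N) (x : 'rV[R]_N) : Prop :=
  forall i, Mi i (padS [set i] x).

Definition grad (f : 'rV[R]_N -> R) (x : 'rV[R]_N) : 'rV[R]_N :=
  \row_j ('D_(delta_mx 0 j) f x).

Definition pgrad_inner (f : 'rV[R]_N -> R) (S : {set 'I_n}) (x y : 'rV[R]_N) : R :=
  \sum_(j | blk j \in S) (y ord0 j - x ord0 j) * grad f x ord0 j.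

Definition CfS (Mi : 'I_n -> set 'rV[R]_N) (f : 'rV[R]_N -> R) (S : {set 'I_n}) : \bar R :=
  ereal_sup [set r | exists x s (g : R), inM Mi x /\ inMS Mi S s /\ 0 < g /\ g <= 1 /\
     r = ((2 / g ^+ 2) * (f (x + g *: (s - padS S x)) - f x
            - pgrad_inner f S x (x + g *: (s - padS S x))))%:E].

Definition Cglob (Mi : 'I_n -> set 'rV[R]_N) (f : 'rV[R]_N -> R) : \bar R :=
  ereal_sup [set r | exists x s (g : R), inM Mi x /\ inM Mi s /\ 0 < g /\ g <= 1 /\
     r = ((2 / g ^+ 2) * (f (x + g *: (s - x)) - f x
            - \sum_j ((x + g *: (s - x)) ord0 j - x ord0 j) * grad f x ord0 j))%:E].

Definition Cprod Mi f : \bar R := (\sum_(i < n) CfS Mi f [set i])%E.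

Definition Ctau Mi f (tau : nat) : \bar R :=
  (((('C(n, tau))%:R : R)^-1)%:E * \sum_(S : {set 'I_n} | #|S| == tau) CfS Mi f S)%E.

End Curv.

(* Main.v *)
Require Import Defs.
From HB Require Import structures.
From mathcomp Require Import all_boot all_order all_algebra.
From mathcomp Require Import all_classical all_reals all_analysis.
From mathcomp Require Import ring.
Import Order.TTheory GRing.Theory Num.Theory.
Import numFieldNormedType.Exports.
Local Open Scope classical_set_scope.
Local Open Scope ring_scope.

Section H.
Variables (R : realType) (N n : nat) (blk : 'I_N -> 'I_n).
Variable (Mi : 'I_n -> set 'rV[R]_N) (f : 'rV[R]_N -> R).

Lemma pgrad_eq (S T : {set 'I_n}) (x y : 'rV[R]_N) :
  (forall j, (blk j \in S) != (blk j \in T) -> y ord0 j = x ord0 j) ->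
  pgrad_inner blk f S x y = pgrad_inner blk f T x y.
Proof.
move=> H; rewrite /pgrad_inner (big_mkcond (fun j => blk j \in S))
  (big_mkcond (fun j => blk j \in T)); apply: eq_bigr => j _.
case eS: (blk j \in S); case eT: (blk j \in T) => //.
- by rewrite H ?eS ?eT // subrr mul0r.
- by rewrite H ?eS ?eT // subrr mul0r.
Qed.

Lemma single_le (S : {set 'I_n}) i : i \in S ->
  (CfS blk Mi f [set i] <= CfS blk Mi f S)%E.
Proof.
move=> iS; apply: ereal_sup_le => r [x [s [g [Hx [[Hsup Hs] [g0 [g1 ->]]]]]]].
have sz : forall j, blk j != i -> s ord0 j = 0.
  by move=> j Hj; apply: Hsup; rewrite inE.
exists x, (s + padS blk (S :\ i) x), g; split; first by [].
have Hv : s + padS blk (S :\ i) x - padS blk S x = s - padS blk [set i] x.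
  apply/rowP => j; rewrite !mxE !inE.
  case: (eqVneq (blk j) i) => [->|ne]; first by rewrite iS /= addr0.
  rewrite sz //= add0r sub0r.
  by case: (blk j \in S); rewrite ?subrr ?oppr0 ?addrN.
split.
  split.
    move=> j; rewrite !mxE !inE => Hj.
    have nei : blk j != i by apply: contraNneq Hj => ->.
    by rewrite sz // (negbTE Hj) andbF add0r.
  move=> k kS; case: (eqVneq k i) => [->|ne].
    suff -> : padS blk [set i] (s + padS blk (S :\ i) x) = padS blk [set i] s by apply: Hs; rewrite inE.
    apply/rowP => j; rewrite !mxE !inE.
    case: (eqVneq (blk j) i) => //= _. by rewrite addr0.
  suff -> : padS blk [set k] (s + padS blk (S :\ i) x) = padS blk [set k] x by apply: Hx.
  apply/rowP => j; rewrite !mxE !inE.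
  case: (eqVneq (blk j) k) => //= E; rewrite E kS (negbTE ne) sz ?add0r // E.
  done.
split; first by [].
split; first by [].
rewrite -/(padS blk S x) Hv; congr (_ * (_ - _))%:E; apply: pgrad_eq => j.
rewrite inE; case: (eqVneq (blk j) i) => [->|ne]; first by rewrite iS.
by move=> _; rewrite !mxE inE (negbTE ne) sz // subr0 mulr0 addr0.
Qed.

Lemma pgrad_T (x y : 'rV[R]_N) :
  \sum_j (y ord0 j - x ord0 j) * grad f x ord0 j = pgrad_inner blk f [set: 'I_n]%SET x y.
Proof. by rewrite /pgrad_inner; apply: eq_bigl => j; rewrite finset.in_setT. Qed.

Lemma S_le_glob (S : {set 'I_n}) :
  (CfS blk Mi f S <= Cglob blk Mi f)%E.
Proof.
apply: ereal_sup_le => r [x [s [g [Hx [[Hsup Hs] [g0 [g1 ->]]]]]]].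
exists x, (s + (x - padS blk S x)), g; split; first by [].
have Hv : s + (x - padS blk S x) - x = s - padS blk S x.
  by apply/rowP => j; rewrite !mxE; ring.
split.
  move=> k; case kS: (k \in S).
    suff -> : padS blk [set k] (s + (x - padS blk S x)) = padS blk [set k] s by apply: Hs.
    apply/rowP => j; rewrite !mxE !inE.
    case: (eqVneq (blk j) k) => //= E; rewrite E kS; ring.
  suff -> : padS blk [set k] (s + (x - padS blk S x)) = padS blk [set k] x by apply: Hx.
  apply/rowP => j; rewrite !mxE !inE.
  case: (eqVneq (blk j) k) => //= E; rewrite Hsup; last by rewrite E kS.
  rewrite E kS; ring.
split; first by [].
split; first by [].
rewrite Hv pgrad_T; congr (_ * (_ - _))%:E; apply: pgrad_eq => j.
rewrite finset.in_setT; case jS: (blk j \in S) => //= _.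
by rewrite !mxE jS Hsup ?jS // subr0 mulr0 addr0.
Qed.

Lemma glob_le_T : (Cglob blk Mi f <= CfS blk Mi f [set: 'I_n]%SET)%E.
Proof.
apply: ereal_sup_le => r [x [s [g [Hx [Hs [g0 [g1 ->]]]]]]].
have pT : padS blk [set: 'I_n]%SET x = x by apply/rowP => j; rewrite !mxE finset.in_setT.
exists x, s, g; split; first by [].
split; first by split => // j; rewrite finset.in_setT.
by rewrite pT pgrad_T.
Qed.

Lemma sum1 (F : {set 'I_n} -> \bar R) :
  (\sum_(S : {set 'I_n} | #|S| == 1%N) F S = \sum_(i < n) F [set i]%SET)%E.
Proof.
rewrite (eq_bigl (fun S => S \in [set [set i]%SET | i : 'I_n]%SET)); last first.
  move=> S; apply/cards1P/imsetP => [[x ->]|[x _ ->]]; by exists x.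
rewrite big_imset /=; last by move=> a b _ _; apply: set1_inj.
by apply: eq_bigl.
Qed.

Lemma cnt (i : 'I_n) (tau : nat) : (0 < tau)%N ->
  #|[set S : {set 'I_n} | (#|S| == tau) && (i \in S)]%SET| = 'C(n.-1, tau.-1).
Proof.
move=> t0.
have -> : [set S : {set 'I_n} | (#|S| == tau) && (i \in S)]%SET =
   [set i |: A | A in [set A : {set 'I_n} | (A \subset [set~ i]%SET) && (#|A| == tau.-1)]]%SET.
  apply/finset.setP => S; rewrite inE; apply/andP/imsetP.
    move=> [/eqP HS iS]; exists (S :\ i).
      rewrite inE; apply/andP; split.
        by apply/fintype.subsetP => j; rewrite !inE => /andP[].
      by move: HS; rewrite (cardsD1 i S) iS => <-.
    by rewrite finset.setD1K.
  move=> [A]; rewrite inE => /andP[sA /eqP cA] ->; split; last by rewrite setU11.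
  rewrite cardsU1 cA.
  have -> : i \notin A by apply/negP => /(fintype.subsetP sA); rewrite !inE eqxx.
  by rewrite add1n prednK.
rewrite card_in_imset.
  by rewrite cards_draws cardsC1 card_ord.
move=> A B; rewrite !inE => /andP[sA _] /andP[sB _] E.
have nA : i \notin A by apply/negP => /(fintype.subsetP sA); rewrite !inE eqxx.
have nB : i \notin B by apply/negP => /(fintype.subsetP sB); rewrite !inE eqxx.
by rewrite -(setU1K nA) -(setU1K nB) E.
Qed.
End H.

Lemma enatE (R : realType) (x : \bar R) m : (x *+ m)%E = (x *+ m)%R.
Proof. by []. Qed.

Theorem lemma1 (R : realType) (N n : nat) (blk : 'I_N -> 'I_n)
  (Mi : 'I_n -> set 'rV[R]_N) (f : 'rV[R]_N -> R)
  (HMsub : forall i, Mi i `<=` supported_on blk [set i])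
  (HMne : forall i, Mi i !=set0)
  (HMcpt : forall i, compact (Mi i))
  (HMcvx : forall i, convex_set (Mi i))
  (Hf : forall x, differentiable f x)
  (S : {set 'I_n}) (tau : nat) (i : 'I_n)
  (HS : #|S| = tau) (Hi : i \in S) :
  ((CfS blk Mi f [set i] <= CfS blk Mi f S)%E /\ (CfS blk Mi f S <= Cglob blk Mi f)%E) /\
  ((((n%:R : R)^-1)%:E * Cprod blk Mi f = Ctau blk Mi f 1)%E /\
   (Ctau blk Mi f 1 <= Ctau blk Mi f tau)%E /\
   (Ctau blk Mi f tau <= Ctau blk Mi f n)%E /\
   Ctau blk Mi f n = Cglob blk Mi f).
Proof.
split; first by split; [apply: single_le | apply: S_le_glob].
have t0 : (0 < tau)%N by rewrite -HS card_gt0; apply/set0Pn; exists i.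
have tn : (tau <= n)%N by rewrite -HS -[X in (_ <= X)%N](card_ord n) max_card.
have n0 : (0 < n)%N by apply: leq_trans tn.
set c := 'C(n, tau).
have c0 : (0 < c)%N by rewrite bin_gt0.
have H1 : Ctau blk Mi f 1 = (((n%:R : R)^-1)%:E * Cprod blk Mi f)%E.
  by rewrite /Ctau /Cprod bin1 sum1.
have Hn : Ctau blk Mi f n = Cglob blk Mi f.
  rewrite /Ctau binn invr1 mul1e.
  rewrite (eq_bigl (pred1 [set: 'I_n]%SET)); last first.
    move=> T; rewrite /= eqEcard finset.subsetT cardsT card_ord /= eqn_leq.
    by rewrite -[X in (_ <= X)%N](card_ord n) max_card.
  rewrite big_pred1_eq; apply/eqP; rewrite eq_le; apply/andP; split.
    exact: S_le_glob.
  exact: glob_le_T.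
split; first by rewrite H1.
split; last first.
  split => //; rewrite Hn /Ctau -/c.
  have Hc : (\sum_(T : {set 'I_n} | #|T| == tau) Cglob blk Mi f = Cglob blk Mi f *+ c)%E.
    rewrite (eq_bigl (fun T => T \in [set T : {set 'I_n} | #|T| == tau]%SET)); last by move=> T; rewrite inE.
    by rewrite sumr_const card_draws card_ord.
  apply: le_trans (_ : ((c%:R : R)^-1)%:E * (Cglob blk Mi f *+ c) <= _)%E.
    apply: lee_wpmul2l; first by rewrite lee_fin invr_ge0 ler0n.
    by rewrite -Hc; apply: lee_sum => T _; apply: S_le_glob.
  rewrite -mule_natl muleA -EFinM mulVf ?mul1e //.
  by rewrite pnatr_eq0 -lt0n.
rewrite H1 /Ctau /Cprod -/c.
set k := 'C(n.-1, tau.-1).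
set X := (\sum_(j < n) CfS blk Mi f [set j]%SET)%E.
set Y := (\sum_(T : {set 'I_n} | #|T| == tau) CfS blk Mi f T)%E.
have nk : (n * k = tau * c)%N by rewrite /k mul_bin_diag prednK.
have key : (X *+ k <= Y *+ tau)%E.
  rewrite !enatE /X /Y -!sumrMnl.
  have E1 : forall j : 'I_n, (CfS blk Mi f [set j]%SET *+ k =
     \sum_(T : {set 'I_n} | (#|T| == tau) && (j \in T)) CfS blk Mi f [set j]%SET)%E.
    move=> j; rewrite (eq_bigl (fun T => T \in [set T : {set 'I_n} | (#|T| == tau) && (j \in T)]%SET)); last by move=> T; rewrite inE.
    by rewrite sumr_const cnt.
  rewrite (eq_bigr _ (fun j _ => E1 j)).
  rewrite -(exchange_big_dep (fun j => true)) //=.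
  apply: lee_sum => T /eqP HT.
  apply: le_trans (_ : \sum_(j | j \in T) CfS blk Mi f T <= _)%E.
    by apply: lee_sum => j jT; apply: single_le.
  rewrite -HT (eq_bigl (fun j => j \in T)) // sumr_const //.
have tR : (tau%:R : R) != 0 by rewrite pnatr_eq0 -lt0n.
have cR : (c%:R : R) != 0 by rewrite pnatr_eq0 -lt0n.
have nR : (n%:R : R) != 0 by rewrite pnatr_eq0 -lt0n.
have e1 : ((n%:R : R)^-1 = (tau%:R * c%:R)^-1 * k%:R).
  have : (n%:R * k%:R = tau%:R * c%:R :> R) by rewrite -!natrM nk.
  move=> h; rewrite -h; field; apply/andP; split => //.
  by apply/negP => /eqP k0; move: h; rewrite k0 mulr0 => /esym/eqP; rewrite mulf_eq0 (negbTE tR) (negbTE cR).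
have e2 : ((c%:R : R)^-1 = (tau%:R * c%:R)^-1 * tau%:R) by field; apply/andP.
rewrite e1 e2 !EFinM -!muleA !mule_natl.
apply: lee_wpmul2l => //; rewrite lee_fin invr_ge0 mulr_ge0 // ler0n.
Qed.
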